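(* There exists $\alpha\in\mu_{p-1}\subset\mathbb Z_p$ such that for every prime number $\ell$ with $\ell\ge p^2$ and $\ell\equiv\alpha\pmod p$, and $\zeta_\ell$ a primitive $\ell$-th root of unity, $$\mathrm{Tr}_{\mathbb Q(\zeta_\ell)/\mathbb Q}\left(\frac{\zeta_\ell^{p+1}+\zeta_\ell^{p-1}}{(\zeta_\ell^p-1)^2}\right)\not\equiv 0\pmod p,$$ i.e. this rational number (which is $p$-integral) has $p$-adic valuation $0$.
   Context: $p\ge5$ is a prime; $\mu_{p-1}\subset\mathbb Z_p$ denotes the $(p-1)$-th roots of unity in $\mathbb Z_p$. *)

(* Defs.v *)
From mathcomp Require Import all_boot all_order all_algebra all_field.
Set Implicit Arguments. Unset Strict Implicit. Unset Printing Implicit Defensive.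
Import Order.TTheory GRing.Theory Num.Theory.
Local Open Scope ring_scope.

Definition xi (p : nat) (z : algC) : algC :=
  (z ^+ p.+1 + z ^+ p.-1) / (z ^+ p - 1) ^+ 2.

(* Trace from Q(zeta_l) to Q for l prime, of an element f(zeta) with f a
   rational function over Q: the sum of its Galois conjugates
   sigma_k(f(zeta)) = f(zeta^k), k = 1, ..., l-1. *)
Definition cyc_trace (l : nat) (f : algC -> algC) (z : algC) : algC :=
  \sum_(1 <= k < l) f (z ^+ k).

Definition padic_val0 (p : nat) (q : rat) : bool :=
  ~~ (p%:Z %| numq q)%Z && ~~ (p%:Z %| denq q)%Z.

(* Main.v *)
Require Import Defs.
From mathcomp Require Import all_boot all_order all_algebra all_field.
From mathcomp Require Import ring zify.
Import Order.TTheory GRing.Theory Num.Theory.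
Set Implicit Arguments. Unset Strict Implicit.
Local Open Scope ring_scope.

Lemma Fp_natr0 p (hp : prime p) n : ((n%:R : 'F_p) == 0) = (p %| n)%N.
Proof. by rewrite (dvdn_pcharf (pchar_Fp hp)). Qed.

Lemma Fp_elt p (hp : prime p) (x : 'F_p) : exists k, (k < p)%N /\ x = k%:R.
Proof.
exists (nat_of_ord x); split; last by rewrite natr_Zp.
by have := ltn_ord x; have := Fp_cast hp; lia.
Qed.

Lemma exists_nonsq p (hp : prime p) (hp5 : (5 <= p)%N) :
  exists a : nat, [/\ (0 < a)%N, (a < p)%N &
     forall b : 'F_p, b ^+ 2 != 3 * (a%:R ^+ 2 + 2)].
Proof.
have nz k : (0 < k < p)%N -> (k%:R : 'F_p) != 0.
  move=> /andP[k0 kp]; rewrite Fp_natr0 //; apply/negP => /(dvdn_leq k0); lia.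
have n2 : (2 : 'F_p) != 0 by apply: (nz 2%N); lia.
have n3 : (3 : 'F_p) != 0 by apply: (nz 3%N); lia.
have nz23 i j : ((2 ^ i * 3 ^ j)%N%:R : 'F_p) != 0.
  by rewrite natrM !natrX mulf_neq0 // expf_neq0.
case: (boolP [exists a : 'I_p, (0 < a)%N &&
   [forall b : 'F_p, b ^+ 2 != 3 * ((a : nat)%:R ^+ 2 + 2)]]).
  case/existsP => a /andP[a0 /forallP H]; exists a; split => //.
move/existsPn => H.
have H' (x : 'F_p) : x != 0 -> exists b : 'F_p, b ^+ 2 = 3 * (x ^+ 2 + 2).
  have [k [kp ->]] := Fp_elt hp x => x0.
  case: (posnP k) => [k0|k0]; first by move: x0; rewrite k0 mulr0n eqxx.
  have := H (Ordinal kp); rewrite /= k0 /= => /forallPn [b].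
  by rewrite negbK => /eqP hb; exists b.
have [c c2] : exists c : 'F_p, c ^+ 2 = 2.
  have [b hb] := H' 2 n2; exists (b / 3).
  by rewrite expr_div_n hb; field; exact: (nz23 0 2)%N.
have c0 : c != 0 by apply: contra n2; rewrite -c2 => /eqP ->; rewrite expr0n.
have [d d2] : exists d : 'F_p, d ^+ 2 = 3.
  have [b hb] := H' c c0; exists (b / 2).
  by rewrite expr_div_n hb c2; field; exact: (nz23 2 0)%N.
have d0 : d != 0 by apply: contra n3; rewrite -d2 => /eqP ->; rewrite expr0n.
have step (x : 'F_p) : x != 0 -> exists e : 'F_p, e ^+ 2 = x ^+ 2 + 2.
  move=> x0; have [b hb] := H' x x0; exists (b / d).
  by rewrite expr_div_n hb -d2; field.
have allsq k : (0 < k < p)%N -> exists e : 'F_p, e ^+ 2 = k%:R.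
  elim: k {-2}k (leqnn k) => [|n IH] k kn kp; first lia.
  case: (ltnP k 3) => k3.
    case: k kn kp k3 => [|[|[|]]] //= _ _ _.
      by exists 1; rewrite expr1n.
    by exists c.
  have h1 : (k - 2 <= n)%N by lia.
  have h2 : (0 < k - 2 < p)%N by apply/andP; split; lia.
  have [e he] := IH (k - 2)%N h1 h2.
  have e0 : e != 0 by apply: contraNneq (nz _ h2) => e0; rewrite -he e0 expr0n.
  have [f hf] := step e e0; exists f.
  by rewrite hf he -natrD; congr (_%:R); lia.
have surj (y : 'F_p) : exists x, y = x ^+ 2.
  have [k [kp ->]] := Fp_elt hp y.
  case: (posnP k) => [->|k0]; first by exists 0; rewrite expr0n.
  have [e he] := allsq k (ltac:(lia)); by exists e.
have : #|image (fun x : 'F_p => x ^+ 2) 'F_p| == #|'F_p|.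
  rewrite eqn_leq leq_image_card /=; apply: subset_leq_card.
  apply/subsetP => y _; have [x ->] := surj y; exact: image_f.
move/image_injP => inj.
have h : (1 : 'F_p) = -1 by apply: inj => //; rewrite sqrrN.
have h2 : (2 : 'F_p) = 1 - (-1) by rewrite opprK.
by move: n2; rewrite h2 -h subrr eqxx.
Qed.
Definition Gs (l : nat) (z : algC) (k s : nat) :=
  \sum_(i < l) (z ^+ i) ^+ s / (z ^+ i - 1) ^+ k.

Lemma zpow1 l (z : algC) (i : 'I_l) : l.-primitive_root z ->
  (z ^+ i == 1) = (i == 0 :> nat).
Proof.
move=> pz; rewrite -(expr0 z) (eq_prim_root_expr pz) mod0n modn_small //.
Qed.

Lemma sum_pow0 l (z : algC) s : l.-primitive_root z -> ~~ (l %| s)%N ->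
  \sum_(i < l) (z ^+ i) ^+ s = 0.
Proof.
move=> pz ns.
have w1 : z ^+ s != 1.
  by rewrite -(expr0 z) (eq_prim_root_expr pz) mod0n -/(dvdn l s).
have : (z ^+ s - 1) * \sum_(i < l) (z ^+ s) ^+ i = 0.
  by rewrite -subrX1 exprAC (prim_expr_order pz) expr1n subrr.
move/eqP; rewrite mulf_eq0 subr_eq0 (negbTE w1) /= => /eqP s0.
rewrite -[RHS]s0; apply: eq_bigr => i _; by rewrite exprAC.
Qed.

Lemma psum_shift (y : algC) l : y ^+ l = 1 -> y != 1 ->
  \sum_(1 <= s < l.+1) y ^+ s = 0.
Proof.
move=> yl y1.
have : (y - 1) * \sum_(i < l) y ^+ i = 0 by rewrite -subrX1 yl subrr.
move/eqP; rewrite mulf_eq0 subr_eq0 (negbTE y1) /= => /eqP s0.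
rewrite big_add1 /= big_mkord.
under eq_bigr do rewrite exprS.
by rewrite -mulr_sumr s0 mulr0.
Qed.

Lemma Gs_sum l (z : algC) k : l.-primitive_root z -> (0 < k)%N ->
  \sum_(1 <= s < l.+1) Gs l z k s = 0.
Proof.
move=> pz k0; rewrite /Gs exchange_big /=; apply: big1 => i _.
rewrite -mulr_suml.
case: (eqVneq (z ^+ i) 1) => [->|ne].
  by rewrite subrr expr0n; case: k k0 => // k _ /=; rewrite invr0 mulr0.
rewrite psum_shift ?mul0r //.
by rewrite exprAC (prim_expr_order pz) expr1n.
Qed.

Lemma Gs_stepG l (z : algC) s :
  Gs l z 2 s.+1 - Gs l z 2 s = Gs l z 1 s.
Proof.
rewrite /Gs -sumrB; apply: eq_bigr => i _.
set y := z ^+ i.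
case: (eqVneq y 1) => [->|ne].
  by rewrite subrr expr0n /= invr0 !mulr0 subrr.
have : y - 1 != 0 by rewrite subr_eq0.
move=> h; rewrite exprS; field.
exact: h.
Qed.

Lemma Gs_stepH l (z : algC) s : l.-primitive_root z -> (0 < l)%N -> ~~ (l %| s)%N ->
  Gs l z 1 s.+1 - Gs l z 1 s = -1.
Proof.
move=> pz l0 ns.
rewrite /Gs -sumrB.
have -> : \sum_(i < l) ((z ^+ i) ^+ s.+1 / (z ^+ i - 1) ^+ 1 - (z ^+ i) ^+ s / (z ^+ i - 1) ^+ 1)
   = \sum_(i < l) ((z ^+ i) ^+ s - (i == Ordinal l0 :> 'I_l)%:R).
  apply: eq_bigr => i _.
  have -> : (i == Ordinal l0) = (z ^+ i == 1) by rewrite zpow1.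
  case: (eqVneq (z ^+ i) 1) => [->|ne].
    by rewrite subrr expr1 invr0 !mulr0 expr1n subrr /= subrr.
  have h : z ^+ i - 1 != 0 by rewrite subr_eq0.
  rewrite /= subr0 expr1 exprS; field; exact: h.
rewrite sumrB sum_pow0 // (bigD1 (Ordinal l0)) //= big1 ?addr0 ?sub0r //.
by move=> i /negbTE ->.
Qed.
Lemma S1 n : \sum_(1 <= s < n.+1) (s%:R - 1 : algC) = n%:R * (n%:R - 1) / 2.
Proof.
elim: n => [|n IH]; first by rewrite big_geq // mul0r mul0r.
rewrite big_nat_recr // IH /= -[n.+1]addn1 natrD; field => //.
Qed.

Lemma S2 n (L : algC) : \sum_(1 <= s < n.+1) (s%:R - 1) * (L + 1 - s%:R) =
  (3%:R * L * n%:R * (n%:R - 1) - (n%:R - 1) * n%:R * (2%:R * n%:R - 1)) / 6%:R.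
Proof.
elim: n => [|n IH]; first by rewrite big_geq //; field.
rewrite big_nat_recr // IH /= -[n.+1]addn1 natrD; field => //.
Qed.

Lemma H_closed l (z : algC) s : l.-primitive_root z -> (1 <= s <= l)%N ->
  Gs l z 1 s = Gs l z 1 1 - (s%:R - 1).
Proof.
move=> pz; elim: s => [|s IH] // hs.
case: (posnP s) => [->|s0]; first by rewrite subrr subr0.
have l0 : (0 < l)%N by lia.
have ns : ~~ (l %| s)%N by apply/negP => /(dvdn_leq s0); lia.
have := Gs_stepH pz l0 ns; rewrite IH; last by lia.
move/eqP; rewrite subr_eq => /eqP ->; rewrite -[s.+1]addn1 natrD; ring.
Qed.

Lemma H1_val l (z : algC) : l.-primitive_root z -> (0 < l)%N ->
  Gs l z 1 1 = (l%:R - 1) / 2.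
Proof.
move=> pz l0.
have := Gs_sum pz (isT : (0 < 1)%N).
rewrite (@eq_big_nat _ _ _ _ _ _ (fun s => Gs l z 1 1 - (s%:R - 1))); last first.
  move=> i hi; apply: H_closed => //; lia.
rewrite sumrB sumr_const_nat S1 subn1 /= -mulr_natr => h.
have hl : (l%:R : algC) != 0 by rewrite pnatr_eq0 -lt0n.
have : l%:R * (Gs l z 1 1 - (l%:R - 1) / 2) = 0.
  by rewrite -[RHS]h; ring.
by move/eqP; rewrite mulf_eq0 (negbTE hl) /= subr_eq0 mul1r => /eqP.
Qed.

Lemma G_closed l (z : algC) s : l.-primitive_root z -> (1 <= s <= l)%N ->
  Gs l z 2 s = Gs l z 2 1 + (s%:R - 1) * (l%:R + 1 - s%:R) / 2.
Proof.
move=> pz; elim: s => [|s IH] // hs.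
case: (posnP s) => [->|s0]; first by rewrite subrr mul0r mul0r addr0.
have l0 : (0 < l)%N by lia.
have := Gs_stepG l z s; rewrite IH; last by lia.
rewrite H_closed //; last by lia.
rewrite H1_val //.
move/eqP; rewrite subr_eq => /eqP ->; rewrite -[s.+1]addn1 natrD; field => //.
Qed.

Lemma G1_val l (z : algC) : l.-primitive_root z -> (0 < l)%N ->
  Gs l z 2 1 = - (l%:R ^+ 2 - 1) / 12%:R.
Proof.
move=> pz l0.
have := Gs_sum pz (isT : (0 < 2)%N).
rewrite (@eq_big_nat _ _ _ _ _ _ (fun s => Gs l z 2 1 + (s%:R - 1) * (l%:R + 1 - s%:R) / 2)); last first.
  move=> i hi; apply: G_closed => //; lia.
rewrite big_split sumr_const_nat -mulr_suml S2 subn1 /= -mulr_natr => h.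
have hl : (l%:R : algC) != 0 by rewrite pnatr_eq0 -lt0n.
have : l%:R * (Gs l z 2 1 + (l%:R ^+ 2 - 1) / 12%:R) = 0.
  rewrite -[RHS]h; field => //.
move/eqP; rewrite mulf_eq0 (negbTE hl) /= addr_eq0 => /eqP ->.
by rewrite mulNr.
Qed.

Lemma cong_facts p l r i : (0 < p)%N -> (r <= l)%N -> (p * r %% l = 1)%N ->
  [/\ (r * i * p = i %[mod l])%N, (r * i * p.+1 = i * r.+1 %[mod l])%N &
      (r * i * p.-1 = i * (l.+1 - r) %[mod l])%N].
Proof.
move=> p0 rl hpr.
have cA : (r * i * p = i %[mod l])%N.
  have -> : (r * i * p = p * r * i)%N by ring.
  by rewrite -modnMml hpr mul1n.
split => //.
  have -> : (r * i * p.+1 = r * i * p + r * i)%N by ring.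
  have -> : (i * r.+1 = i + r * i)%N by ring.
  by rewrite -modnDml cA modnDml.
apply/eqP; rewrite -(eqn_modDr (r * i)).
have -> : (r * i * p.-1 + r * i = r * i * p)%N.
  by rewrite -mulnSr prednK.
have -> : (i * (l.+1 - r) + r * i = i * l + i)%N.
  have h1 : (i * r <= i * l.+1)%N by rewrite leq_mul2l; apply/orP; right; lia.
  by rewrite mulnBr [(r * i)%N]mulnC subnK // mulnS addnC.
by rewrite cA modnMDl.
Qed.

Lemma trace_formula p l r (z : algC) : l.-primitive_root z -> (1 < l)%N ->
  (0 < p)%N -> (0 < r < l)%N -> (p * r %% l = 1)%N ->
  cyc_trace l (xi p) z = (r * (l - r))%:R - (l%:R ^+ 2 - 1) / 6%:R.
Proof.
move=> pz l1 p0 /andP [r0 rl] hpr.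
have l0 : (0 < l)%N by lia.
have xi1 : xi p 1 = 0 by rewrite /xi !expr1n subrr expr0n /= invr0 mulr0.
have -> : cyc_trace l (xi p) z = \sum_(i < l) xi p (z ^+ i).
  by rewrite /cyc_trace; symmetry; rewrite -(big_mkord xpredT (fun i => xi p (z ^+ i))) big_ltn // expr0 xi1 add0r.
pose g (i : 'I_l) : 'I_l := Ordinal (ltn_pmod (r * i) l0).
have ginj : injective g.
  move=> i j /(congr1 val) /= h.
  have : (p * r * i %% l = p * r * j %% l)%N.
    by rewrite -mulnA -modnMmr h modnMmr mulnA.
  rewrite -modnMml hpr mul1n -[in RHS]modnMml hpr mul1n !modn_small //.
  by move=> e; apply: val_inj.
rewrite (reindex_inj ginj) /=.
have E a b : (a = b %[mod l])%N -> z ^+ a = z ^+ b.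
  by move=> h; apply/eqP; rewrite (eq_prim_root_expr pz) h.
have -> : \sum_(i < l) xi p (z ^+ (r * i %% l)) = Gs l z 2 r.+1 + Gs l z 2 (l.+1 - r).
  rewrite /Gs -big_split; apply: eq_bigr => i _.
  have [cA cB cC] := cong_facts i p0 (ltnW rl) hpr.
  rewrite prim_expr_mod // /xi -!exprM (E _ _ cA) (E _ _ cB) (E _ _ cC).
  by rewrite mulrDl.
have h1 : (1 <= r.+1 <= l)%N by apply/andP; split; lia.
have h2 : (1 <= l.+1 - r <= l)%N by apply/andP; split; lia.
rewrite (G_closed pz h1) (G_closed pz h2) (G1_val pz l0).
have h3 : (r <= l)%N by lia.
have h4 : (r <= l.+1)%N by lia.
rewrite natrM (natrB _ h3) (natrB _ h4) -[l.+1]addn1 natrD.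
by field.
Qed.

Lemma six_dvd l : prime l -> (5 < l)%N -> (6 %| l ^ 2 - 1)%N.
Proof.
move=> pl l5.
have [_ pd] := primeP pl.
have n2 : ~~ (2 %| l)%N.
  by apply/negP => /pd /orP []; lia.
have n3 : ~~ (3 %| l)%N.
  by apply/negP => /pd /orP []; lia.
have -> : (l ^ 2 - 1 = (l - 1) * (l + 1))%N by nia.
rewrite (@Gauss_dvd 2 3) //; apply/andP; split.
  by apply: dvdn_mulr; lia.
have : (3 %| l - 1)%N || (3 %| l + 1)%N by lia.
by case/orP => h; [apply: dvdn_mulr | apply: dvdn_mull].
Qed.

Unset Implicit Arguments.
Set Strict Implicit.

Theorem lemma3p4 (p : nat) (hp : prime p) (hp5 : (5 <= p)%N) :
  exists a : nat, [/\ (0 < a)%N, (a < p)%N &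
    forall (l : nat) (zeta : algC),
      prime l -> (p ^ 2 <= l)%N -> l = a %[mod p] ->
      l.-primitive_root zeta ->
      exists q : rat, ratr q = cyc_trace l (xi p) zeta /\ padic_val0 p q].
Proof.
have [a [a0 ap ha]] := exists_nonsq hp hp5.
exists a; split => // l zeta pl lp2 la pz.
have lp : (p < l)%N by nia.
have l1 : (1 < l)%N by lia.
have npl : ~~ (p %| l)%N.
  have [_ pd] := primeP pl.
  by apply/negP => /pd /orP []; lia.
have cop : coprime l p by rewrite coprime_sym prime_coprime.
have [a' a'l hd] := Bezoutl p (ltnW l1).
move: hd; rewrite (eqP cop) => /dvdnP [k hk].
set r := (l - a')%N.
have a'0 : (0 < a')%N.
  case: (posnP a') => // e; move: hk; rewrite e mul0n addn0 => hk.
  by case: k hk => [|k] hk; nia.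
have hpr : (p * r %% l = 1)%N.
  have e : (p * r + k * l = p * l + 1)%N.
    rewrite -hk /r mulnBr; have : (p * a' <= p * l)%N by rewrite leq_mul2l; lia.
    lia.
  by rewrite -(modnMDl k) addnC e modnMDl modn_small.
have r0 : (0 < r < l)%N by apply/andP; split; lia.
have := trace_formula pz l1 (ltnW (ltnW (ltnW (ltnW hp5)))) r0 hpr.
set m := (r * (l - r))%N.
set N := ((l ^ 2 - 1) %/ 6)%N.
have hN : (N * 6 = l ^ 2 - 1)%N by rewrite divnK // six_dvd //; lia.
pose z : int := (m%:Z - N%:Z)%R.
move=> tr.
exists (z%:~R); split.
  rewrite ratr_int tr /z rmorphB /= -!pmulrn.
  congr (_ - _).
  have l2 : (1 <= l ^ 2)%N by rewrite expn_gt0; lia.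
  have : (N%:R * 6%:R = l%:R ^+ 2 - 1 :> algC).
    by rewrite -natrM hN natrB // natrX.
  by move=> <-; field.
rewrite /padic_val0 numq_int denq_int.
apply/andP; split; last by rewrite dvdzE /= dvdn1; lia.
apply/negP; rewrite -eqz_mod_dvd !modz_nat => /eqP [] hmN.
pose x : 'F_p := r%:R.
pose A : 'F_p := a%:R.
have hlA : (l%:R : 'F_p) = A by rewrite /A -(Fp_nat_mod hp) la Fp_nat_mod.
have hm : (m%:R : 'F_p) = N%:R by rewrite -(Fp_nat_mod hp) hmN Fp_nat_mod.
have hrl : (r <= l)%N by lia.
have hmx : (m%:R : 'F_p) = x * (A - x).
  by rewrite /m natrM (natrB _ hrl) hlA.
have l2 : (1 <= l ^ 2)%N by rewrite expn_gt0; lia.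
have h6 : (N%:R * 6 : 'F_p) = A ^+ 2 - 1.
  by rewrite -natrM hN (natrB _ l2) natrX hlA.
have e : 6 * (x * (A - x)) = A ^+ 2 - 1 by rewrite -hmx hm mulrC h6.
have := ha (6 * x - 3 * A); apply/negP; rewrite negbK.
rewrite -subr_eq0.
have -> : (6 * x - 3 * A) ^+ 2 - 3 * (A ^+ 2 + 2) =
   - 6 * (6 * (x * (A - x)) - (A ^+ 2 - 1)) by ring.
by rewrite e subrr mulr0.
Qed.
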